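(* Let $n\ge5$ be odd and write $c_j=\cos(2\pi j/n)$. Then $$Su_4:=\frac32\sum_{j=\lceil n/4\rceil}^{(n-1)/2}\ \sum_{k=\lceil n/4\rceil}^{(n-1)/2}\frac{1}{|c_j-c_k+1|}\ \le\ \frac{3}{32}\,n^2\ln n.$$
   Context: $\ln$ denotes the natural logarithm. *)

(* Defs.v *)
From Stdlib Require Import Reals Lra Lia.
From Coquelicot Require Import Coquelicot.
Open Scope R_scope.

Definition cj (n j : nat) : R := cos (2 * PI * INR j / INR n).

Definition ceil4 (n : nat) : nat := Nat.div (n + 3) 4.

Definition Su4 (n : nat) : R :=
  3 / 2 * sum_n_m (fun j =>
            sum_n_m (fun k => / Rabs (cj n j - cj n k + 1))
                    (ceil4 n) (Nat.div (n - 1) 2))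
          (ceil4 n) (Nat.div (n - 1) 2).

(* Main.v *)
Require Import Defs.
From Stdlib Require Import Reals Lra Lia Psatz.
From Coquelicot Require Import Coquelicot.
Open Scope R_scope.

Lemma sum_le_loc (f g : nat -> R) (a b : nat) :
  (forall k, (a <= k <= b)%nat -> f k <= g k) -> sum_n_m f a b <= sum_n_m g a b.
Proof.
  induction b as [|b IH]; intros H.
  - destruct a.
    + rewrite !sum_n_n. apply H; lia.
    + rewrite !sum_n_m_zero by lia. lra.
  - destruct (Compare_dec.le_lt_dec a (S b)) as [Hab|Hab].
    + destruct (Nat.eq_dec a (S b)) as [->|Hne].
      * rewrite !sum_n_n. apply H; lia.
      * rewrite !sum_n_Sm by lia. unfold plus; simpl.
        apply Rplus_le_compat. apply IH; intros; apply H; lia. apply H; lia.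
    + rewrite !sum_n_m_zero by lia. lra.
Qed.

Lemma telesc (f G : nat -> R) (a b : nat) : (a <= S b)%nat ->
  (forall k, (a <= k <= b)%nat -> f k <= G (S k) - G k) ->
  sum_n_m f a b <= G (S b) - G a.
Proof.
  induction b as [|b IH]; intros Ha H.
  - destruct a.
    + rewrite sum_n_n. apply H; lia.
    + rewrite sum_n_m_zero by lia. replace a with 0%nat by lia. unfold zero; simpl. lra.
  - destruct (Nat.eq_dec a (S (S b))) as [->|Hne].
    + rewrite sum_n_m_zero by lia. unfold zero; simpl. lra.
    + rewrite sum_n_Sm by lia. unfold plus; simpl.
      assert (H1 := IH ltac:(lia) ltac:(intros; apply H; lia)).
      assert (H2 := H (S b) ltac:(lia)). lra.
Qed.

Lemma INR_fact_small : INR (Factorial.fact 0) = 1 /\ INR (Factorial.fact 2) = 2 /\ INR (Factorial.fact 4) = 24 /\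
  INR (Factorial.fact 6) = 720 /\ INR (Factorial.fact 8) = 40320 /\ INR (Factorial.fact 1) = 1 /\ INR (Factorial.fact 3) = 6.
Proof. rewrite !INR_IZR_INZ. repeat split; reflexivity. Qed.

Ltac tay H := unfold cos_approx, cos_term, sin_approx, sin_term in H;
  cbn [sum_f_R0 Nat.mul Nat.add] in H;
  destruct INR_fact_small as (f0 & f2 & f4 & f6 & f8 & f1 & f3);
  rewrite ?f0, ?f2, ?f4, ?f6, ?f8, ?f1, ?f3 in H; clear f0 f2 f4 f6 f8 f1 f3.

Lemma PI_bounds : 3.14 <= PI <= 3.15.
Proof.
  assert (H3 := PI2_3_2). assert (H4 := PI_4).
  split.
  - assert (1.57 < PI/2); [|lra].
    apply PI2_lower_bound; [lra|].
    replace 1.57 with (2 * 0.785) by lra. rewrite cos_2a_cos.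
    destruct (cos_bound 0.785 1) as [cl cu]; try lra. tay cl. nra.
  - destruct (Rle_or_lt PI 3.15) as [h|h]; [exact h|exfalso].
    assert (0 <= cos 1.575) by (apply cos_ge_0; lra).
    revert H. replace 1.575 with (2 * 0.7875) by lra. rewrite cos_2a_cos.
    destruct (cos_bound 0.7875 1) as [cl cu]; try lra. tay cu. tay cl. nra.
Qed.

Lemma cos_ub (x : R) : 0 <= x <= PI/2 -> cos x <= 1 - x^2/2 + x^4/24.
Proof.
  intros [H1 H2]. destruct (cos_bound x 0) as [_ H]; try lra. tay H. lra.
Qed.

Lemma sin_lb (x : R) : 0 <= x <= PI -> x - x^3/6 <= sin x.
Proof.
  intros [H1 H2]. destruct (sin_bound x 0) as [H _]; try lra. tay H. lra.
Qed.

Lemma exp_nat_mul (x : R) (N : nat) : exp (INR N * x) = exp x ^ N.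
Proof.
  induction N as [|N IH]. simpl. rewrite Rmult_0_l. apply exp_0.
  rewrite S_INR, Rmult_plus_distr_r, Rmult_1_l, exp_plus, IH. simpl. ring.
Qed.

Lemma ln_lb (c y : R) (N : nat) : 0 <= c -> c < INR N -> 0 < y ->
  1 <= y * (1 - c / INR N)^N -> c <= ln y.
Proof.
  intros Hc HcN Hy H.
  assert (HN : 0 < INR N) by lra.
  set (x := c / INR N).
  assert (Hx0 : 0 <= x) by (unfold x; apply Rdiv_le_0_compat; lra).
  assert (Hx1 : x < 1) by (unfold x; apply Rmult_lt_reg_r with (INR N); [lra|];
     field_simplify; lra).
  assert (E : exp c = exp x ^ N).
  { rewrite <- exp_nat_mul. f_equal. unfold x. field. lra. }
  assert (K : exp x * (1 - x) <= 1).
  { assert (h := exp_ineq1_le (-x)).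
    assert (exp x * exp (-x) = 1) by (rewrite <- exp_plus; replace (x + -x) with 0 by ring; apply exp_0).
    assert (0 < exp x) by apply exp_pos. nra. }
  assert (K2 : (exp x * (1 - x))^N <= 1).
  { apply Rle_trans with (1^N); [|rewrite pow1; lra]. apply pow_incr. split; [|exact K].
    assert (0 < exp x) by apply exp_pos. nra. }
  rewrite Rpow_mult_distr in K2.
  assert (exp c <= y).
  { rewrite E. assert (0 < (1-x)^N) by (apply pow_lt; lra).
    destruct (Rle_or_lt (exp x ^ N) y) as [hh|hh]; [exact hh|exfalso].
    assert (0 < (exp x ^ N - y) * (1-x)^N) by (apply Rmult_lt_0_compat; lra).
    change (c / INR N) with x in H. nra. }
  rewrite <- (ln_exp c). apply ln_le. apply exp_pos. assumption.
Qed.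

Lemma ln7 : 1.9 <= ln 7.
Proof. apply (ln_lb _ _ 64); try (simpl; lra). Qed.

Definition sg (n j : nat) : R := PI * (INR n - 2 * INR j) / INR n.
Definition ta (n k : nat) : R := PI * (4 * INR k - INR n) / (2 * INR n).

Lemma cj_j (n j : nat) : (0 < n)%nat -> cj n j = - cos (sg n j).
Proof.
  intros Hn. assert (0 < INR n) by (apply lt_0_INR; lia).
  unfold cj, sg. rewrite <- Rtrigo_facts.cos_pi_minus. f_equal. field. lra.
Qed.

Lemma cj_k (n k : nat) : (0 < n)%nat -> cj n k = - sin (ta n k).
Proof.
  intros Hn. assert (0 < INR n) by (apply lt_0_INR; lia).
  unfold cj, ta. rewrite sin_cos. rewrite Ropp_involutive. f_equal. field. lra.
Qed.

Lemma sg_range (n j : nat) : (n + 1 <= 4 * j)%nat -> (2 * j + 1 <= n)%nat ->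
  PI / INR n <= sg n j <= PI / 2.
Proof.
  intros H1 H2. apply le_INR in H1. apply le_INR in H2.
  rewrite plus_INR, mult_INR in H1, H2. simpl in H1, H2.
  assert (0 < INR n) by lra. assert (HP := PI_RGT_0).
  unfold sg. split.
  - unfold Rdiv. apply Rmult_le_compat_r. left; apply Rinv_0_lt_compat; lra.
    nra.
  - apply Rmult_le_reg_r with (INR n); [lra|]. field_simplify; [|lra]. nra.
Qed.

Lemma ta_range (n k : nat) : (n + 1 <= 4 * k)%nat -> (2 * k + 1 <= n)%nat ->
  PI / (2 * INR n) <= ta n k <= PI / 2.
Proof.
  intros H1 H2. apply le_INR in H1. apply le_INR in H2.
  rewrite plus_INR, mult_INR in H1, H2. simpl in H1, H2.
  assert (0 < INR n) by lra. assert (HP := PI_RGT_0).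
  unfold ta. split.
  - unfold Rdiv. apply Rmult_le_compat_r. left; apply Rinv_0_lt_compat; lra.
    nra.
  - apply Rmult_le_reg_r with (2 * INR n); [lra|]. field_simplify; [|lra]. nra.
Qed.

Definition T (n j k : nat) : R := / Rabs (cj n j - cj n k + 1).

Lemma T_eq (n j k : nat) : (n + 1 <= 4 * j)%nat -> (2 * j + 1 <= n)%nat ->
  (n + 1 <= 4 * k)%nat -> (2 * k + 1 <= n)%nat ->
  T n j k = / ((1 - cos (sg n j)) + sin (ta n k)) /\ 0 <= 1 - cos (sg n j) /\ 0 < sin (ta n k).
Proof.
  intros H1 H2 H3 H4.
  assert (Hn : (0 < n)%nat) by lia.
  destruct (ta_range n k H3 H4) as [t1 t2].
  assert (HP := PI_RGT_0). assert (0 < INR n) by (apply lt_0_INR; lia).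
  assert (0 < PI / (2 * INR n)) by (apply Rdiv_lt_0_compat; lra).
  assert (Hs : 0 < sin (ta n k)) by (apply sin_gt_0; lra).
  assert (Hc : 0 <= 1 - cos (sg n j)) by (assert (h := COS_bound (sg n j)); lra).
  unfold T. rewrite cj_j, cj_k by lia.
  rewrite Rabs_right by lra. split; [f_equal; ring|lra].
Qed.

Lemma inv_le_c (e c : R) : 0 < e -> 1 <= c * e -> / e <= c.
Proof.
  intros He H. assert (0 < / e) by (apply Rinv_0_lt_compat; lra).
  replace c with (/ e * (c * e)) by (field; lra). 
  rewrite <- (Rmult_1_r (/ e)) at 1. apply Rmult_le_compat_l; lra.
Qed.

Lemma T_le_X (n j k : nat) : (n + 1 <= 4 * j)%nat -> (2 * j + 1 <= n)%nat ->
  (n + 1 <= 4 * k)%nat -> (2 * k + 1 <= n)%nat ->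
  T n j k <= / ta n k + 3 * ta n k / 10.
Proof.
  intros H1 H2 H3 H4. destruct (T_eq n j k H1 H2 H3 H4) as (E & Y & X).
  rewrite E. destruct (ta_range n k H3 H4) as [t1 t2].
  assert (HP := PI_bounds). assert (0 < INR n) by (apply lt_0_INR; lia).
  assert (0 < PI / (2 * INR n)) by (apply Rdiv_lt_0_compat; lra).
  set (t := ta n k) in *.
  assert (Hl := sin_lb t ltac:(lra)).
  apply Rle_trans with (/ sin t). apply Rinv_le_contravar; lra.
  apply Rle_trans with (/ (t - t^3/6)). apply Rinv_le_contravar; [nra|lra].
  apply inv_le_c. nra.
  assert (t * t <= 2.49) by nra.
  replace ((/ t + 3 * t / 10) * (t - t ^ 3 / 6)) with (1 + t*t*(2/15 - t*t/20)) by (field; lra).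
  nra.
Qed.

Lemma T_le_Y (n j k : nat) : (n + 1 <= 4 * j)%nat -> (2 * j + 1 <= n)%nat ->
  (n + 1 <= 4 * k)%nat -> (2 * k + 1 <= n)%nat ->
  T n j k <= 2 / (sg n j)^2 + (22/100).
Proof.
  intros H1 H2 H3 H4. destruct (T_eq n j k H1 H2 H3 H4) as (E & Y & X).
  rewrite E. destruct (sg_range n j H1 H2) as [t1 t2].
  assert (HP := PI_bounds). assert (0 < INR n) by (apply lt_0_INR; lia).
  assert (0 < PI / INR n) by (apply Rdiv_lt_0_compat; lra).
  set (t := sg n j) in *.
  assert (Hl := cos_ub t ltac:(lra)).
  apply Rle_trans with (/ (1 - cos t)). apply Rinv_le_contravar; [|lra].
  assert (t * t <= 2.49) by nra. nra.
  apply Rle_trans with (/ (t^2/2 - t^4/24)). apply Rinv_le_contravar; [|lra].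
  assert (t * t <= 2.49) by nra. nra.
  apply inv_le_c. assert (t * t <= 2.49) by nra. nra.
  assert (t * t <= 2.49) by nra.
  replace ((2 / t ^ 2 + (22/100)) * (t ^ 2 / 2 - t ^ 4 / 24)) with (1 + t*t*((11/100) - 1/12 - (22/100)*t*t/24)) by (field; lra).
  nra.
Qed.

Definition Ylow (a : R) := a^2/2 - a^4/24.
Definition Xlow (b : R) := b - b^3/6.

Lemma T_le_E (n j k : nat) : (n + 1 <= 4 * j)%nat -> (2 * j + 1 <= n)%nat ->
  (n + 1 <= 4 * k)%nat -> (2 * k + 1 <= n)%nat ->
  T n j k <= / (Ylow (314/100 * (INR n - 2 * INR j) / INR n)
               + Xlow (314/100 * (4 * INR k - INR n) / (2 * INR n))).
Proof.
  intros H1 H2 H3 H4. destruct (T_eq n j k H1 H2 H3 H4) as (E & Y & X).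
  rewrite E. destruct (ta_range n k H3 H4) as [t1 t2].
  destruct (sg_range n j H1 H2) as [s1 s2].
  assert (HP := PI_bounds). assert (0 < INR n) by (apply lt_0_INR; lia).
  assert (0 < PI / INR n) by (apply Rdiv_lt_0_compat; lra).
  assert (0 < PI / (2*INR n)) by (apply Rdiv_lt_0_compat; lra).
  assert (Ia : 0 <= INR n - 2 * INR j).
  { apply le_INR in H2. rewrite plus_INR, mult_INR in H2. simpl in H2. lra. }
  assert (Ib : 1 <= 4 * INR k - INR n).
  { apply le_INR in H3. rewrite plus_INR, mult_INR in H3. simpl in H3. lra. }
  set (a := 314/100 * (INR n - 2 * INR j) / INR n).
  set (b := 314/100 * (4 * INR k - INR n) / (2 * INR n)).
  assert (Ha0 : 0 <= a) by (unfold a; apply Rdiv_le_0_compat; lra).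
  assert (Hb0 : 0 < b) by (unfold b; apply Rdiv_lt_0_compat; lra).
  assert (Has : a <= sg n j).
  { unfold a, sg, Rdiv. apply Rmult_le_compat_r. left; apply Rinv_0_lt_compat; lra. nra. }
  assert (Hbt : b <= ta n k).
  { unfold b, ta, Rdiv. apply Rmult_le_compat_r. left; apply Rinv_0_lt_compat; lra. nra. }
  set (s := sg n j) in *. set (t := ta n k) in *.
  assert (Hc := cos_ub s ltac:(lra)).
  assert (Hsb : sin b <= sin t) by (apply sin_incr_1; lra).
  assert (Hxb := sin_lb b ltac:(lra)).
  assert (s*s <= 2.49) by nra. assert (a * a <= 2.49) by nra. assert (b*b <= 2.49) by nra.
  assert (Yge : Ylow a <= 1 - cos s).
  { unfold Ylow. assert ((s*s - a*a) * (1/2 - (s*s+a*a)/24) >= 0).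
    { apply Rle_ge, Rmult_le_pos; nra. }
    nra. }
  assert (0 <= Ylow a) by (unfold Ylow; nra).
  assert (0 < Xlow b) by (unfold Xlow; nra).
  apply Rinv_le_contravar; [lra|]. unfold Xlow in *. lra.
Qed.

Lemma T_p1 (n j k : nat) : (19 <= n)%nat -> (2 * j + 1 = n)%nat -> (4 * k = n + 1)%nat ->
  T n j k <= 2 / (PI / INR n) - 19/10 + 2 * (PI / INR n).
Proof.
  intros Hn H2 H3.
  destruct (T_eq n j k ltac:(lia) ltac:(lia) ltac:(lia) ltac:(lia)) as (E & Y & X).
  rewrite E.
  assert (HP := PI_bounds).
  assert (HN : 19 <= INR n) by (apply (le_INR 19) in Hn; simpl in Hn; lra).
  assert (Es : sg n j = PI / INR n).
  { unfold sg. apply (f_equal INR) in H2. rewrite plus_INR, mult_INR in H2. simpl in H2.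
    replace (INR n - 2 * INR j) with 1 by lra. field. lra. }
  assert (Et : ta n k = (PI / INR n) / 2).
  { unfold ta. apply (f_equal INR) in H3. rewrite plus_INR, mult_INR in H3. simpl in H3.
    replace (4 * INR k - INR n) with 1 by lra. field. lra. }
  rewrite Es, Et. set (v := PI / INR n).
  assert (Hv0 : 0 < v) by (unfold v; apply Rdiv_lt_0_compat; lra).
  assert (Hv1 : v <= 0.17).
  { unfold v. apply Rmult_le_reg_r with (INR n); [lra|]. field_simplify; lra. }
  assert (Hc := cos_ub v ltac:(lra)).
  assert (Hs := sin_lb (v/2) ltac:(lra)).
  apply Rle_trans with (/ (v^2/2 - v^4/24 + (v/2 - (v/2)^3/6))).
  apply Rinv_le_contravar; [nra|lra].
  apply inv_le_c; [nra|].
  replace ((2 / v - 19/10 + 2 * v) * (v ^ 2 / 2 - v ^ 4 / 24 + (v / 2 - (v / 2) ^ 3 / 6)))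
    with ((2 - 19/10 * v + 2*v^2) * (1/2 + v/2 - v^2/48 - v^3/24)) by (field; lra).
  nra.
Qed.

Lemma idx_range (n j : nat) : Nat.odd n = true ->
  (ceil4 n <= j <= Nat.div (n - 1) 2)%nat -> (n + 1 <= 4 * j)%nat /\ (2 * j + 1 <= n)%nat.
Proof.
  intros Ho [H1 H2].
  assert (Hm : exists m, n = (2 * m + 1)%nat).
  { apply Nat.odd_spec in Ho. destruct Ho as [m Hm]. exists m. lia. }
  destruct Hm as [m ->].
  unfold ceil4 in H1.
  replace (2 * m + 1 - 1)%nat with (m * 2)%nat in H2 by lia.
  rewrite Nat.div_mul in H2 by lia.
  assert (E := Nat.div_mod_eq (2 * m + 1 + 3) 4).
  assert (R := Nat.mod_upper_bound (2 * m + 1 + 3) 4 ltac:(lia)).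
  lia.
Qed.

Lemma Su4_le_E (n : nat) : Nat.odd n = true ->
  Su4 n <= 3 / 2 * sum_n_m (fun j => sum_n_m (fun k =>
     / (Ylow (314/100 * (INR n - 2 * INR j) / INR n)
               + Xlow (314/100 * (4 * INR k - INR n) / (2 * INR n))))
     (ceil4 n) (Nat.div (n - 1) 2)) (ceil4 n) (Nat.div (n - 1) 2).
Proof.
  intros Ho. unfold Su4. apply Rmult_le_compat_l; [lra|].
  apply sum_le_loc. intros j Hj. apply sum_le_loc. intros k Hk.
  destruct (idx_range n j Ho Hj). destruct (idx_range n k Ho Hk).
  apply (T_le_E n j k); auto.
Qed.

Ltac expand_sums :=
  repeat (first [rewrite sum_n_n | rewrite sum_Sn_m by lia]); unfold plus; simpl.

Lemma case7 : Su4 7 <= 3 / 32 * (INR 7) ^ 2 * ln (INR 7).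
Proof.
  eapply Rle_trans; [apply Su4_le_E; reflexivity|].
  replace (ceil4 7) with 2%nat by reflexivity.
  replace (Nat.div (7 - 1) 2) with 3%nat by reflexivity.
  assert (L := ln7).
  replace (INR 7) with 7 by (simpl; lra).
  expand_sums. unfold Ylow, Xlow. lra.
Qed.

Lemma case11 : Su4 11 <= 3 / 32 * (INR 11) ^ 2 * ln (INR 11).
Proof.
  eapply Rle_trans; [apply Su4_le_E; reflexivity|].
  replace (ceil4 11) with 3%nat by reflexivity.
  replace (Nat.div (11 - 1) 2) with 5%nat by reflexivity.
  assert (L : 1.9 <= ln 11) by (apply Rle_trans with (ln 7); [apply ln7|apply ln_le; lra]).
  replace (INR 11) with 11 by (simpl; lra).
  expand_sums. unfold Ylow, Xlow. lra.
Qed.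

Lemma case15 : Su4 15 <= 3 / 32 * (INR 15) ^ 2 * ln (INR 15).
Proof.
  eapply Rle_trans; [apply Su4_le_E; reflexivity|].
  replace (ceil4 15) with 4%nat by reflexivity.
  replace (Nat.div (15 - 1) 2) with 7%nat by reflexivity.
  assert (L : 1.9 <= ln 15) by (apply Rle_trans with (ln 7); [apply ln7|apply ln_le; lra]).
  replace (INR 15) with 15 by (simpl; lra).
  expand_sums. unfold Ylow, Xlow. lra.
Qed.

Lemma case19 : Su4 19 <= 3 / 32 * (INR 19) ^ 2 * ln (INR 19).
Proof.
  eapply Rle_trans; [apply Su4_le_E; reflexivity|].
  replace (ceil4 19) with 5%nat by reflexivity.
  replace (Nat.div (19 - 1) 2) with 9%nat by reflexivity.
  assert (L : 1.9 <= ln 19) by (apply Rle_trans with (ln 7); [apply ln7|apply ln_le; lra]).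
  replace (INR 19) with 19 by (simpl; lra).
  expand_sums. unfold Ylow, Xlow. lra.
Qed.
Lemma ln_diff (x y : R) : 0 < x -> x < y -> (y - x) / y <= ln y - ln x.
Proof.
  intros Hx Hy.
  assert (0 < x / y) by (apply Rdiv_lt_0_compat; lra).
  assert (h := exp_ineq1_le (ln (x / y))). rewrite exp_ln in h by lra.
  rewrite ln_div in h by lra.
  replace ((y - x) / y) with (1 - x / y) by (field; lra). lra.
Qed.

Definition G2 (n : nat) (k : nat) : R :=
  INR n / (2 * PI) * ln (4 * INR k - INR n - 4)
  + 3 * PI / (20 * INR n) * (2 * INR k ^ 2 - (INR n + 2) * INR k).

Definition G1 (n : nat) (j : nat) : R :=
  (INR n ^ 2 / PI ^ 2) / (INR n - 2 * INR j + 1) + 22/100 * INR j.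

Lemma sumX (n j a b : nat) : (a <= S b)%nat -> (n + 1 <= 4 * j)%nat -> (2 * j + 1 <= n)%nat ->
  (n + 5 <= 4 * a)%nat -> (2 * b + 1 <= n)%nat ->
  sum_n_m (fun k => T n j k) a b <= G2 n (S b) - G2 n a.
Proof.
  intros Hab H1 H2 H3 H4. apply telesc; [exact Hab|].
  intros k Hk.
  eapply Rle_trans; [apply (T_le_X n j k); auto; lia|].
  assert (Hq : 5 <= 4 * INR k - INR n).
  { assert (h : (n + 5 <= 4 * k)%nat) by lia. apply le_INR in h.
    rewrite plus_INR, mult_INR in h. simpl in h. lra. }
  assert (HN : 0 < INR n) by (apply lt_0_INR; lia).
  assert (HP := PI_bounds).
  unfold G2, ta. rewrite S_INR.
  replace (4 * (INR k + 1) - INR n - 4) with (4 * INR k - INR n) by ring.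
  set (q := 4 * INR k - INR n).
  assert (Hq' : 5 <= q) by (unfold q; lra).
  assert (Hl := ln_diff (q - 4) q ltac:(lra) ltac:(lra)).
  replace (4 * INR k - INR n - 4) with (q - 4) by (unfold q; ring).
  assert (E : / (PI * q / (2 * INR n)) = INR n / (2 * PI) * (4 / q)) by (field; split; lra).
  rewrite E.
  replace ((q - (q - 4)) / q) with (4 / q) in Hl by (field; lra).
  assert (INR n / (2 * PI) * (4 / q) <= INR n / (2 * PI) * (ln q - ln (q - 4))).
  { apply Rmult_le_compat_l; [|lra]. apply Rdiv_le_0_compat; lra. }
  assert (E2 : 3 * (PI * q / (2 * INR n)) / 10 = 3 * PI / (20 * INR n) *
     (2 * (INR k + 1) ^ 2 - (INR n + 2) * (INR k + 1) - (2 * INR k ^ 2 - (INR n + 2) * INR k)))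
     by (unfold q; field; lra).
  rewrite E2. lra.
Qed.

Lemma sumY (n k a b : nat) : (a <= S b)%nat -> (n + 1 <= 4 * k)%nat -> (2 * k + 1 <= n)%nat ->
  (n + 1 <= 4 * a)%nat -> (2 * b + 3 <= n)%nat ->
  sum_n_m (fun j => T n j k) a b <= G1 n (S b) - G1 n a.
Proof.
  intros Hab H1 H2 H3 H4. apply telesc; [exact Hab|].
  intros j Hj.
  eapply Rle_trans; [apply (T_le_Y n j k); auto; lia|].
  assert (Hp : 3 <= INR n - 2 * INR j).
  { assert (h : (2 * j + 3 <= n)%nat) by lia. apply le_INR in h.
    rewrite plus_INR, mult_INR in h. simpl in h. lra. }
  assert (HN : 0 < INR n) by (apply lt_0_INR; lia).
  assert (HP := PI_bounds).
  unfold G1, sg. rewrite S_INR.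
  set (p := INR n - 2 * INR j).
  assert (Hp' : 3 <= p) by (unfold p; lra).
  replace (INR n - 2 * (INR j + 1) + 1) with (p - 1) by (unfold p; ring).
  replace (INR n - 2 * INR j + 1) with (p + 1) by (unfold p; ring).
  assert (E : 2 / (PI * p / INR n) ^ 2 = (INR n ^ 2 / PI ^ 2) * (2 / p^2)) by (field; split; lra).
  rewrite E.
  assert (Hf : 2 / p^2 <= 1 / (p - 1) - 1 / (p + 1)).
  { replace (1 / (p - 1) - 1 / (p + 1)) with (2 / (p^2 - 1)) by (field; repeat split; nra).
    apply Rmult_le_compat_l; [lra|]. apply Rinv_le_contravar; nra. }
  assert (0 <= INR n ^ 2 / PI ^ 2) by (apply Rdiv_le_0_compat; nra).
  assert (INR n ^ 2 / PI ^ 2 * (2 / p ^ 2) <= INR n ^ 2 / PI ^ 2 * (1 / (p - 1) - 1 / (p + 1)))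
    by (apply Rmult_le_compat_l; lra).
  replace (INR n ^ 2 / PI ^ 2 / (p - 1)) with (INR n ^ 2 / PI ^ 2 * (1 / (p - 1))) by (field; lra).
  replace (INR n ^ 2 / PI ^ 2 / (p + 1)) with (INR n ^ 2 / PI ^ 2 * (1 / (p + 1))) by (field; lra).
  lra.
Qed.
Lemma final1 (S L P : R) : 1 <= S -> 15/10 <= L -> 314/100 <= P <= 315/100 ->
  3/2 * S * (2 * (4*S+1) / (3 * P) + 9 * P / (20 * (4*S+1))
     + (4*S+1) / (2 * P) * (L - 1)
     + 3 * P / (20 * (4*S+1)) * ((2*(2*S+1)^2 - ((4*S+1)+2)*(2*S+1)) - (2*(S+2)^2 - ((4*S+1)+2)*(S+2))))
  <= 3/32 * (4*S+1)^2 * L.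
Proof.
  intros HS HL HP.
  set (N := 4*S+1).
  assert (HN : 5 <= N) by (unfold N; lra).
  assert (E1 : 2 * N / (3 * P) + N / (2 * P) * (L - 1) = N / P * (2/3 + (L-1)/2)) by (field; lra).
  assert (E2 : 9 * P / (20 * N) + 3 * P / (20 * N) * ((2*(2*S+1)^2 - (N+2)*(2*S+1)) - (2*(S+2)^2 - (N+2)*(S+2)))
              = P * (3 * S * (2*S+1) / N) / 20).
  { unfold N. field. lra. }
  assert (B1 : N / P * (2/3 + (L-1)/2) <= N / (314/100) * (2/3 + (L-1)/2)).
  { apply Rmult_le_compat_r; [lra|]. unfold Rdiv. apply Rmult_le_compat_l; [lra|].
    apply Rinv_le_contravar; lra. }
  assert (B2 : 3 * S * (2*S+1) / N <= 3 * (2*S+1) / 4).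
  { unfold N. apply Rmult_le_reg_r with (4*S+1); [lra|]. field_simplify; [|lra]. nra. }
  assert (B3 : P * (3 * S * (2*S+1) / N) / 20 <= 315/100 * (3 * (2*S+1) / 4) / 20).
  { assert (0 <= 3 * S * (2*S+1) / N) by (apply Rdiv_le_0_compat; nra).
    unfold Rdiv at 1 3. apply Rmult_le_compat_r; [lra|]. apply Rmult_le_compat; lra. }
  fold N.
  replace (3 / 2 * S * (2 * N / (3 * P) + 9 * P / (20 * N) + N / (2 * P) * (L - 1) +
    3 * P / (20 * N) * (2 * (2 * S + 1) ^ 2 - (N + 2) * (2 * S + 1) - (2 * (S + 2) ^ 2 - (N + 2) * (S + 2)))))
    with (3/2 * S * ((2 * N / (3 * P) + N / (2 * P) * (L - 1)) + (9 * P / (20 * N) + 3 * P / (20 * N) * ((2*(2*S+1)^2 - (N+2)*(2*S+1)) - (2*(S+2)^2 - (N+2)*(S+2)))))) by ring.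
  rewrite E1, E2.
  apply Rle_trans with (3/2 * S * (N / (314/100) * (2/3 + (L-1)/2) + 315/100 * (3 * (2*S+1) / 4) / 20)).
  { apply Rmult_le_compat_l; lra. }
  unfold N. nra.
Qed.
Lemma poly3 (S L : R) : 5 <= S -> 29/10 <= L ->
  3/2 * ( (4*S+3) * (2 + (S+1)*(2/5 + (L - 15/10)/2)) * (100/314)
        + (4*S+3)^2 * S / (2*S+2) * (100/314)^2
        + 315/100 * ((2 + (S+1)*(3/4 + 3*(2*S^2+3*S-5)/20)) / (4*S+3))
        - 19/10 + 22/100*S ) <= 3/32 * (4*S+3)^2 * L.
Proof.
  intros HS HL.
  assert (K1 : (4*S+3)^2 * S / (2*S+2) <= (4*S+3)^2/2 - (8*S+4)).
  { apply Rmult_le_reg_r with (2*S+2); [lra|]. field_simplify; [|lra]. nra. }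
  assert (K2 : (2 + (S+1)*(3/4 + 3*(2*S^2+3*S-5)/20)) / (4*S+3) <= 3/40*S^2 + 14/100*S + 1/10).
  { apply Rmult_le_reg_r with (4*S+3); [lra|]. field_simplify; [|lra]. nra. }
  assert (K3 : 0 <= (L - 29/10) * ((4*S+3) * (3/32*(4*S+3) - 3/4*(S+1)*(100/314)))).
  { apply Rmult_le_pos; [lra|]. apply Rmult_le_pos; lra. }
  assert (K4 : 0 <= (S - 5) * (S - 5) * (S-5)) by (apply Rmult_le_pos; [apply Rmult_le_pos|]; lra).
  assert (K5 : 0 <= (S - 5) * (S - 5)) by (apply Rmult_le_pos; lra).
  nra.
Qed.

Lemma ln3 : 1 <= ln 3.
Proof. apply (ln_lb _ _ 64); try (simpl; lra). Qed.
Lemma ln5 : 15/10 <= ln 5.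
Proof. apply (ln_lb _ _ 64); try (simpl; lra). Qed.
Lemma ln23 : 29/10 <= ln 23.
Proof. apply (ln_lb _ _ 64); try (simpl; lra). Qed.

Lemma case1 (s : nat) : (1 <= s)%nat ->
  Su4 (4 * s + 1) <= 3 / 32 * (INR (4 * s + 1)) ^ 2 * ln (INR (4 * s + 1)).
Proof.
  intros Hs. set (n := (4 * s + 1)%nat).
  assert (Hc : ceil4 n = S s).
  { unfold ceil4, n. replace (4 * s + 1 + 3)%nat with (S s * 4)%nat by lia. apply Nat.div_mul; lia. }
  assert (Hb : Nat.div (n - 1) 2 = (2 * s)%nat).
  { unfold n. replace (4 * s + 1 - 1)%nat with (2 * s * 2)%nat by lia. apply Nat.div_mul; lia. }
  assert (HP := PI_bounds).
  set (SS := INR s). set (N := INR n).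
  assert (HS : 1 <= SS) by (apply (le_INR 1) in Hs; simpl in Hs; exact Hs).
  assert (HN : N = 4 * SS + 1) by (unfold N, n, SS; rewrite plus_INR, mult_INR; simpl; ring).
  set (R := (/ ta n (S s) + 3 * ta n (S s) / 10) + (G2 n (S (2 * s)) - G2 n (S (S s)))).
  assert (Hin : forall j, (S s <= j <= 2 * s)%nat -> sum_n_m (fun k => T n j k) (S s) (2 * s) <= R).
  { intros j Hj. rewrite sum_Sn_m by lia. unfold plus; simpl.
    apply Rplus_le_compat.
    - apply T_le_X; unfold n; lia.
    - apply sumX; unfold n; lia. }
  unfold Su4. fold n. rewrite Hc, Hb.
  eapply Rle_trans.
  { apply Rmult_le_compat_l; [lra|]. apply (sum_le_loc _ (fun _ => R)). exact Hin. }
  rewrite sum_n_m_const. replace (S (2 * s) - S s)%nat with s by lia. fold SS.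
  fold N. rewrite HN.
  assert (Eta : ta n (S s) = PI * 3 / (2 * (4 * SS + 1))).
  { unfold ta. fold N. rewrite HN, S_INR. fold SS. field. lra. }
  assert (Eg1 : INR (S (2 * s)) = 2 * SS + 1) by (rewrite S_INR, mult_INR; fold SS; simpl; ring).
  assert (Eg2 : INR (S (S s)) = SS + 2) by (rewrite !S_INR; fold SS; ring).
  assert (L1 : ln (4 * (2 * SS + 1) - (4 * SS + 1) - 4) <= ln (4 * SS + 1)).
  { apply ln_le; lra. }
  assert (L2 : ln (4 * (SS + 2) - (4 * SS + 1) - 4) = ln 3).
  { f_equal. ring. }
  assert (L3 := ln3).
  assert (LL : 15/10 <= ln (4 * SS + 1)).
  { apply Rle_trans with (ln 5); [apply ln5|apply ln_le; lra]. }
  assert (HR : R <= 2 * (4*SS+1) / (3 * PI) + 9 * PI / (20 * (4*SS+1))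
     + (4*SS+1) / (2 * PI) * (ln (4*SS+1) - 1)
     + 3 * PI / (20 * (4*SS+1)) * ((2*(2*SS+1)^2 - ((4*SS+1)+2)*(2*SS+1)) - (2*(SS+2)^2 - ((4*SS+1)+2)*(SS+2)))).
  { unfold R, G2. rewrite Eta, Eg1, Eg2. fold N. rewrite HN. rewrite L2.
    assert (0 < (4 * SS + 1) / (2 * PI)) by (apply Rdiv_lt_0_compat; lra).
    assert ((4 * SS + 1) / (2 * PI) * (ln (4 * (2 * SS + 1) - (4 * SS + 1) - 4) - ln 3)
       <= (4 * SS + 1) / (2 * PI) * (ln (4 * SS + 1) - 1)) by (apply Rmult_le_compat_l; lra).
    assert (E1 : / (PI * 3 / (2 * (4 * SS + 1))) = 2 * (4 * SS + 1) / (3 * PI)) by (field; lra).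
    assert (E2 : 3 * (PI * 3 / (2 * (4 * SS + 1))) / 10 = 9 * PI / (20 * (4 * SS + 1))) by (field; lra).
    rewrite E1, E2. lra. }
  eapply Rle_trans.
  { apply Rmult_le_compat_l; [lra|]. apply Rmult_le_compat_l; [lra|]. exact HR. }
  rewrite <- Rmult_assoc. apply final1; lra.
Qed.

Lemma case3 (s : nat) : (5 <= s)%nat ->
  Su4 (4 * s + 3) <= 3 / 32 * (INR (4 * s + 3)) ^ 2 * ln (INR (4 * s + 3)).
Proof.
  intros Hs. set (n := (4 * s + 3)%nat).
  assert (Hc : ceil4 n = S s).
  { unfold ceil4, n. replace (4 * s + 3 + 3)%nat with (S s * 4 + 2)%nat by lia.
    rewrite Nat.div_add_l by lia. simpl. lia. }
  assert (Hb : Nat.div (n - 1) 2 = S (2 * s)).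
  { unfold n. replace (4 * s + 3 - 1)%nat with (S (2 * s) * 2)%nat by lia. apply Nat.div_mul; lia. }
  assert (HP := PI_bounds).
  set (SS := INR s). set (N := INR n).
  assert (HS : 5 <= SS) by (apply (le_INR 5) in Hs; simpl in Hs; unfold SS; lra).
  assert (HN : N = 4 * SS + 3) by (unfold N, n, SS; rewrite plus_INR, mult_INR; simpl; ring).
  set (R := (/ ta n (S (S s)) + 3 * ta n (S (S s)) / 10) + (G2 n (S (S (2 * s))) - G2 n (S (S (S s))))).
  assert (Hin : forall j, (S s <= j <= S (2 * s))%nat ->
     sum_n_m (fun k => T n j k) (S s) (S (2 * s)) <= T n j (S s) + R).
  { intros j Hj. rewrite sum_Sn_m by lia. unfold plus; simpl.
    apply Rplus_le_compat_l. rewrite sum_Sn_m by lia. unfold plus; simpl.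
    apply Rplus_le_compat.
    - apply T_le_X; unfold n; lia.
    - apply sumX; unfold n; lia. }
  unfold Su4. fold n. rewrite Hc, Hb.
  eapply Rle_trans.
  { apply Rmult_le_compat_l; [lra|]. apply (sum_le_loc _ (fun j => T n j (S s) + R)). exact Hin. }
  assert (Esum : sum_n_m (fun j => T n j (S s) + R) (S s) (S (2 * s))
      = sum_n_m (fun j => T n j (S s)) (S s) (S (2 * s)) + INR (S s) * R).
  { replace (fun j => T n j (S s) + R) with (fun j => plus (T n j (S s)) ((fun _ => R) j)) by reflexivity.
    rewrite sum_n_m_plus, sum_n_m_const.
    replace (S (S (2 * s)) - S s)%nat with (S s) by lia. reflexivity. }
  rewrite Esum. clear Esum Hin.
  rewrite sum_n_Sm by lia. change (plus ?a ?b) with (a + b).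
  assert (HY : sum_n_m (fun j => T n j (S s)) (S s) (2 * s) <= G1 n (S (2 * s)) - G1 n (S s))
    by (apply sumY; unfold n; lia).
  assert (HP1 : T n (S (2 * s)) (S s) <= 2 / (PI / INR n) - 19/10 + 2 * (PI / INR n))
    by (apply T_p1; unfold n; lia).
  fold N in HP1.
  assert (Eg1 : INR (S (2 * s)) = 2 * SS + 1) by (rewrite S_INR, mult_INR; fold SS; simpl; ring).
  assert (Eg0 : INR (S s) = SS + 1) by (rewrite S_INR; fold SS; ring).
  assert (Eg2 : INR (S (S (2 * s))) = 2 * SS + 2) by (rewrite !S_INR, mult_INR; fold SS; simpl; ring).
  assert (Eg3 : INR (S (S (S s))) = SS + 3) by (rewrite !S_INR; fold SS; ring).
  assert (Eg4 : INR (S (S s)) = SS + 2) by (rewrite !S_INR; fold SS; ring).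
  set (P := PI) in *.
  assert (EG1 : G1 n (S (2*s)) - G1 n (S s) = (N^2/P^2) * (SS/(2*SS+2)) + 22/100*SS).
  { unfold G1. fold N. rewrite Eg1, Eg0, HN. change PI with P. field. repeat split; lra. }
  assert (LL : 29/10 <= ln N).
  { rewrite HN. apply Rle_trans with (ln 23); [apply ln23|apply ln_le; lra]. }
  assert (L5 := ln5).
  assert (HR : R <= 2 * N / (5 * P) + 15 * P / (20 * N) + N / (2 * P) * (ln N - 15/10)
                   + 3 * P / (20 * N) * (2 * SS^2 + 3 * SS - 5)).
  { unfold R, G2, ta. fold N. rewrite Eg2, Eg3, Eg4. rewrite HN.
    assert (L1 : ln (4 * (2 * SS + 2) - (4 * SS + 3) - 4) <= ln (4 * SS + 3)) by (apply ln_le; lra).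
    assert (L2 : ln (4 * (SS + 3) - (4 * SS + 3) - 4) = ln 5) by (f_equal; ring).
    change PI with P. rewrite L2.
    assert (0 < (4 * SS + 3) / (2 * P)) by (apply Rdiv_lt_0_compat; lra).
    assert ((4 * SS + 3) / (2 * P) * (ln (4 * (2 * SS + 2) - (4 * SS + 3) - 4) - ln 5)
       <= (4 * SS + 3) / (2 * P) * (ln (4 * SS + 3) - 15/10)) by (apply Rmult_le_compat_l; lra).
    assert (E1 : / (P * (4 * (SS + 2) - (4 * SS + 3)) / (2 * (4 * SS + 3))) = 2 * (4 * SS + 3) / (5 * P)) by (field; lra).
    assert (E2 : 3 * (P * (4 * (SS + 2) - (4 * SS + 3)) / (2 * (4 * SS + 3))) / 10 = 15 * P / (20 * (4 * SS + 3))) by (field; lra).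
    assert (E3 : 2 * (2 * SS + 2) ^ 2 - (4 * SS + 3 + 2) * (2 * SS + 2) - (2 * (SS + 3) ^ 2 - (4 * SS + 3 + 2) * (SS + 3))
        = 2 * SS^2 + 3 * SS - 5) by ring.
    rewrite E1, E2.
    assert (E4 : forall u v w, 3 * P / (20 * (4 * SS + 3)) * (u - v) - 3 * P / (20 * (4 * SS + 3)) * w
        = 3 * P / (20 * (4 * SS + 3)) * (u - v - w)) by (intros; ring).
    lra. }
  set (Lg := ln N) in *.
  assert (Hsum : sum_n_m (fun j : nat => T n j (S s)) (S s) (2 * s) + T n (S (2 * s)) (S s) + INR (S s) * R
     <= (N^2/P^2) * (SS/(2*SS+2)) + 22/100*SS + (2 / (P / N) - 19/10 + 2 * (P / N))
        + (SS + 1) * (2 * N / (5 * P) + 15 * P / (20 * N) + N / (2 * P) * (Lg - 15/10)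
                   + 3 * P / (20 * N) * (2 * SS^2 + 3 * SS - 5))).
  { rewrite Eg0. rewrite <- EG1.
    assert ((SS + 1) * R <= (SS + 1) * (2 * N / (5 * P) + 15 * P / (20 * N) + N / (2 * P) * (Lg - 15/10)
                   + 3 * P / (20 * N) * (2 * SS^2 + 3 * SS - 5))) by (apply Rmult_le_compat_l; lra).
    lra. }
  eapply Rle_trans. { apply Rmult_le_compat_l; [lra|exact Hsum]. }
  rewrite HN. rewrite HN in Hsum. clear Hsum.
  assert (Ha : / P <= 100/314) by (replace (100/314) with (/ (314/100)) by field; apply Rinv_le_contravar; lra).
  assert (Ha0 : 0 < / P) by (apply Rinv_0_lt_compat; lra).
  set (N' := 4 * SS + 3).
  assert (HN' : 23 <= N') by (unfold N'; lra).
  assert (C1 : 0 <= 2 + (SS+1)*(2/5 + (Lg - 15/10)/2)) by nra.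
  assert (C2 : 0 <= 2 + (SS+1)*(3/4 + 3*(2*SS^2+3*SS-5)/20)) by nra.
  assert (Eq : (N'^2/P^2) * (SS/(2*SS+2)) + 22/100*SS + (2 / (P / N') - 19/10 + 2 * (P / N'))
        + (SS + 1) * (2 * N' / (5 * P) + 15 * P / (20 * N') + N' / (2 * P) * (Lg - 15/10)
                   + 3 * P / (20 * N') * (2 * SS^2 + 3 * SS - 5))
      = N' * (2 + (SS+1)*(2/5 + (Lg - 15/10)/2)) * (/ P)
        + N'^2 * SS / (2*SS+2) * (/ P)^2
        + P * ((2 + (SS+1)*(3/4 + 3*(2*SS^2+3*SS-5)/20)) / N')
        - 19/10 + 22/100*SS).
  { field. repeat split; lra. }
  rewrite Eq.
  eapply Rle_trans; [|apply (poly3 SS Lg); lra].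
  fold N'.
  apply Rmult_le_compat_l; [lra|].
  assert (D1 : N' * (2 + (SS+1)*(2/5 + (Lg - 15/10)/2)) * (/ P) <= N' * (2 + (SS+1)*(2/5 + (Lg - 15/10)/2)) * (100/314)).
  { apply Rmult_le_compat_l; [|lra]. apply Rmult_le_pos; lra. }
  assert (D2 : N'^2 * SS / (2*SS+2) * (/ P)^2 <= N'^2 * SS / (2*SS+2) * (100/314)^2).
  { apply Rmult_le_compat_l. apply Rdiv_le_0_compat; nra. apply pow_incr; lra. }
  assert (D3 : P * ((2 + (SS+1)*(3/4 + 3*(2*SS^2+3*SS-5)/20)) / N') <= 315/100 * ((2 + (SS+1)*(3/4 + 3*(2*SS^2+3*SS-5)/20)) / N')).
  { apply Rmult_le_compat_r; [apply Rdiv_le_0_compat; lra|lra]. }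
  lra.
Qed.

Theorem mainTheorem6 (n : nat) (Hn : (5 <= n)%nat) (Hodd : Nat.odd n = true) :
  Su4 n <= 3 / 32 * (INR n) ^ 2 * ln (INR n).
Proof.
  assert (Hm : exists m, n = (2 * m + 1)%nat).
  { apply Nat.odd_spec in Hodd. destruct Hodd as [m Hm]. exists m. lia. }
  destruct Hm as [m Hm].
  destruct (Nat.Even_or_Odd m) as [[s Hs]|[s Hs]].
  - replace n with (4 * s + 1)%nat by lia. apply case1. lia.
  - assert (E : n = (4 * s + 3)%nat) by lia. rewrite E.
    destruct (Compare_dec.le_lt_dec 5 s) as [h|h].
    + apply case3; exact h.
    + assert (Hc : (s = 1 \/ s = 2 \/ s = 3 \/ s = 4)%nat) by lia. destruct Hc as [ -> | [ -> | [ -> | -> ] ] ].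
      * apply case7.
      * apply case11.
      * apply case15.
      * apply case19.
Qed.
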